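(* Let $X$ be a compact Riemannian manifold, $T:X\to X$ a diffeomorphism, and $f:X\to\mathbb{R}^\omega$ a continuous cocycle. Then for every $\epsilon>0$ there is a continuous cocycle $g:X\to\mathbb{R}^\omega$ with $\sup_{x\in X} d(f(x),g(x))<\epsilon$ such that the skew-product $T_g(x,v)=(T(x),g(x)+v)$ on $X\times\mathbb{R}^\omega$ is not transitive. In particular, no cocycle $X\to\mathbb{R}^\omega$ is stably transitive in the supremum metric, i.e. the set of transitive cocycles has empty interior.
   Context: $\mathbb{R}^\omega=\prod_{n=1}^\infty\mathbb{R}$ with metric $d(\{a_n\},\{b_n\})=\sum_{n=1}^\infty 2^{-n}\frac{|a_n-b_n|}{1+|a_n-b_n|}$. A map is transitive if some point has dense forward orbit; a cocycle $f$ is transitive if $T_f$ is, and stably transitive if all cocycles sufficiently close to it in the supremum metric $\sup_x d(f(x),g(x))$ are transitive. *)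

(* Defs.v *)
From Stdlib Require Import Reals List.
From Coquelicot Require Import Coquelicot.
Open Scope R_scope.

Record is_metric {X : Type} (d : X -> X -> R) : Prop := {
  metric_nonneg : forall x y, 0 <= d x y;
  metric_eq0 : forall x y, d x y = 0 <-> x = y;
  metric_sym : forall x y, d x y = d y x;
  metric_triangle : forall x y z, d x z <= d x y + d y z }.

Definition open_in {X : Type} (d : X -> X -> R) (U : X -> Prop) : Prop :=
  forall x, U x -> exists e, 0 < e /\ forall y, d x y < e -> U y.

Definition compact_space {X : Type} (d : X -> X -> R) : Prop :=
  forall (I : Type) (U : I -> X -> Prop),
    (forall i, open_in d (U i)) -> (forall x, exists i, U i x) ->
    exists l : list I, forall x, exists i, In i l /\ U i x.

Definition continuous_map {X Y : Type} (dX : X -> X -> R) (dY : Y -> Y -> R)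
  (f : X -> Y) : Prop :=
  forall x e, 0 < e -> exists delta, 0 < delta /\
    forall y, dX x y < delta -> dY (f x) (f y) < e.

Definition homeomorphism {X : Type} (dX : X -> X -> R) (T : X -> X) : Prop :=
  continuous_map dX dX T /\
  exists Tinv : X -> X, (forall x, Tinv (T x) = x) /\ (forall x, T (Tinv x) = x)
                        /\ continuous_map dX dX Tinv.

Definition Romega := nat -> R.

(* d(a,b) = sum_{n>=1} 2^{-n} |a_n-b_n|/(1+|a_n-b_n|); coordinate n of the paper is index n-1 here *)
Definition romega_dist (a b : Romega) : R :=
  Series (fun n => (/2) ^ (S n) * (Rabs (a n - b n) / (1 + Rabs (a n - b n)))).

Definition skew {X : Type} (T : X -> X) (g : X -> Romega) (p : X * Romega) : X * Romega :=
  (T (fst p), fun n => g (fst p) n + snd p n).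

(* a map is transitive if some point has dense forward orbit;
   X x R^omega carries the product topology (metric max(dX, d)) *)
Definition transitive_map {X : Type} (dX : X -> X -> R) (S : X * Romega -> X * Romega) : Prop :=
  exists p : X * Romega, forall (q : X * Romega) (e : R), 0 < e ->
    exists k : nat, dX (fst (Nat.iter k S p)) (fst q) < e /\
                    romega_dist (snd (Nat.iter k S p)) (snd q) < e.

Definition sup_dist_lt {X : Type} (f g : X -> Romega) (eps : R) : Prop :=
  exists M, M < eps /\ forall x, romega_dist (f x) (g x) <= M.

Definition cocycle_transitive {X : Type} (dX : X -> X -> R) (T : X -> X) (f : X -> Romega) : Prop :=
  transitive_map dX (skew T f).

Definition stably_transitive {X : Type} (dX : X -> X -> R) (T : X -> X) (f : X -> Romega) : Prop :=
  exists delta, 0 < delta /\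
    forall g : X -> Romega, continuous_map dX romega_dist g -> sup_dist_lt f g delta ->
      cocycle_transitive dX T g.

(* Main.v *)
Require Import Defs.
From Stdlib Require Import Reals List Lra Lia Arith.
From Coquelicot Require Import Coquelicot.
Open Scope R_scope.

Definition delta_seq (N : nat) (c : R) (n : nat) : R :=
  if Nat.eq_dec n N then c else 0.

Lemma delta_sum (N : nat) (c : R) (m : nat) :
  sum_n (delta_seq N c) m = if le_dec N m then c else 0.
Proof.
  induction m as [|m IH].
  - rewrite sum_O. unfold delta_seq.
    destruct (Nat.eq_dec 0 N); destruct (le_dec N 0); try lia; reflexivity.
  - rewrite sum_Sn, IH. unfold plus; simpl. unfold delta_seq.
    destruct (le_dec N m); destruct (Nat.eq_dec (S m) N); destruct (le_dec N (S m));
      try lia; lra.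
Qed.

Lemma delta_is_series (N : nat) (c : R) : is_series (delta_seq N c) c.
Proof.
  unfold is_series. change (is_lim_seq (sum_n (delta_seq N c)) c).
  apply (is_lim_seq_ext_loc (fun _ => c)).
  - exists N. intros m Hm. rewrite delta_sum. destruct (le_dec N m); [reflexivity | lia].
  - apply is_lim_seq_const.
Qed.

Lemma half_pow_pos n : 0 < (/2)^n.
Proof. apply pow_lt; lra. Qed.

Lemma frac_bounds t : 0 <= t -> 0 <= t / (1 + t) <= 1.
Proof.
  intro H. split.
  - apply Rdiv_le_0_compat; lra.
  - apply Rmult_le_reg_r with (1 + t); [lra|].
    unfold Rdiv. rewrite Rmult_assoc, Rinv_l; lra.
Qed.

Definition term (a b : Romega) (n : nat) : R :=
  (/2) ^ (S n) * (Rabs (a n - b n) / (1 + Rabs (a n - b n))).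

Lemma term_bounds a b n : 0 <= term a b n <= (/2) ^ n.
Proof.
  unfold term. pose proof (frac_bounds _ (Rabs_pos (a n - b n))).
  pose proof (half_pow_pos n). simpl. split.
  - apply Rmult_le_pos; [|lra]. apply Rmult_le_pos; lra.
  - assert ((/2) * (/2)^n * (Rabs (a n - b n) / (1 + Rabs (a n - b n))) <= (/2)*(/2)^n * 1).
    { apply Rmult_le_compat_l; [|lra]. apply Rmult_le_pos; lra. }
    lra.
Qed.

Lemma term_ex a b : ex_series (term a b).
Proof.
  apply (@ex_series_le R_AbsRing R_CompleteNormedModule _ (fun n => (/2)^n)).
  - intro n. pose proof (term_bounds a b n). change norm with Rabs; simpl.
    rewrite Rabs_pos_eq; lra.
  - apply ex_series_geom. rewrite Rabs_pos_eq; lra.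
Qed.

Lemma dist_ge_term a b N : term a b N <= romega_dist a b.
Proof.
  unfold romega_dist. fold (term a b).
  rewrite <- (is_series_unique _ _ (delta_is_series N (term a b N))).
  apply Series_le; [|apply term_ex].
  intro n. unfold delta_seq. destruct (Nat.eq_dec n N).
  - subst; pose proof (term_bounds a b N); lra.
  - pose proof (term_bounds a b n); lra.
Qed.

Definition modg (f : Romega) (N : nat) : Romega :=
  fun n => if Nat.eq_dec n N then 1 else f n.

Lemma modg_cont (X : Type) (dX : X -> X -> R) f N :
  continuous_map dX romega_dist f ->
  continuous_map dX romega_dist (fun x => modg (f x) N).
Proof.
  intros Hf x e He. destruct (Hf x e He) as [d [Hd H]].
  exists d; split; auto. intros y Hy. specialize (H y Hy).
  eapply Rle_lt_trans; [|exact H]. unfold romega_dist. fold (term (f x) (f y)).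
  fold (term (modg (f x) N) (modg (f y) N)).
  apply Series_le; [|apply term_ex]. intro n.
  pose proof (term_bounds (modg (f x) N) (modg (f y) N) n).
  pose proof (term_bounds (f x) (f y) n).
  split; [lra|]. unfold term, modg. destruct (Nat.eq_dec n N).
  - replace (1 - 1) with 0 by lra. rewrite Rabs_R0.
    replace (0 / (1 + 0)) with 0 by (field; lra). rewrite Rmult_0_r. unfold term in H1; lra.
  - lra.
Qed.

Lemma modg_close f N : romega_dist f (modg f N) <= (/2) ^ (S N).
Proof.
  unfold romega_dist. fold (term f (modg f N)).
  rewrite <- (is_series_unique _ _ (delta_is_series N ((/2)^(S N)))).
  apply Series_le.
  - intro n. pose proof (term_bounds f (modg f N) n). split; [lra|].
    unfold delta_seq, term, modg. destruct (Nat.eq_dec n N).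
    + subst. pose proof (frac_bounds _ (Rabs_pos (f N - 1))).
      pose proof (half_pow_pos (S N)).
      assert ((/2)^(S N) * (Rabs (f N - 1) / (1 + Rabs (f N - 1))) <= (/2)^(S N) * 1)
        by (apply Rmult_le_compat_l; lra). lra.
    + replace (f n - f n) with 0 by lra. rewrite Rabs_R0.
      replace (0 / (1 + 0)) with 0 by (field; lra). lra.
  - exists ((/2)^(S N)). apply delta_is_series.
Qed.

Lemma iter_coord (X : Type) (T : X -> X) f N (p : X * Romega) k :
  snd (Nat.iter k (skew T (fun x => modg (f x) N)) p) N = snd p N + INR k.
Proof.
  induction k as [|k IH].
  - simpl. lra.
  - change (Nat.iter (S k) ?F p) with (F (Nat.iter k F p)).
    unfold skew at 1. simpl snd. rewrite IH. unfold modg.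
    destruct (Nat.eq_dec N N); [|congruence]. rewrite S_INR. lra.
Qed.

Lemma modg_not_trans (X : Type) (dX : X -> X -> R) T f N :
  ~ cocycle_transitive dX T (fun x => modg (f x) N).
Proof.
  intros [p Hp].
  set (c := (/2)^(S N) * /2).
  assert (Hc : 0 < c) by (unfold c; pose proof (half_pow_pos (S N)); lra).
  destruct (Hp (fst p, fun n => snd p n - 1) c Hc) as [k [_ Hk]].
  pose proof (dist_ge_term (snd (Nat.iter k (skew T (fun x => modg (f x) N)) p))
                (fun n => snd p n - 1) N) as Ht.
  unfold term in Ht. rewrite iter_coord in Ht. simpl snd in Hk.
  replace (snd p N + INR k - (snd p N - 1)) with (INR k + 1) in Ht by lra.
  pose proof (pos_INR k).
  rewrite Rabs_pos_eq in Ht by lra.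
  assert (/2 <= (INR k + 1) / (1 + (INR k + 1))).
  { apply Rmult_le_reg_r with (1 + (INR k + 1)); [lra|].
    unfold Rdiv. rewrite Rmult_assoc, Rinv_l; lra. }
  pose proof (half_pow_pos (S N)).
  assert (c <= (/2)^(S N) * ((INR k + 1) / (1 + (INR k + 1))))
    by (unfold c; apply Rmult_le_compat_l; lra).
  lra.
Qed.

Lemma part1 (X : Type) (dX : X -> X -> R) (T : X -> X) :
  forall f : X -> Romega, continuous_map dX romega_dist f ->
     forall eps, 0 < eps ->
       exists g : X -> Romega, continuous_map dX romega_dist g /\
         sup_dist_lt f g eps /\ ~ cocycle_transitive dX T g.
Proof.
  intros f Hf eps He.
  destruct (pow_lt_1_zero (/2) ltac:(rewrite Rabs_pos_eq; lra) eps He) as [N HN].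
  exists (fun x => modg (f x) N). split; [apply modg_cont; auto|split].
  - exists ((/2)^(S N)). split.
    + specialize (HN (S N) ltac:(lia)). rewrite Rabs_pos_eq in HN; auto.
      pose proof (half_pow_pos (S N)); lra.
    + intro x. apply modg_close.
  - apply modg_not_trans.
Qed.

Theorem mainTheorem6 (X : Type) (dX : X -> X -> R) (T : X -> X)
  (hd : is_metric dX) (hcomp : compact_space dX) (hT : homeomorphism dX T) :
  (forall f : X -> Romega, continuous_map dX romega_dist f ->
     forall eps, 0 < eps ->
       exists g : X -> Romega, continuous_map dX romega_dist g /\
         sup_dist_lt f g eps /\ ~ cocycle_transitive dX T g)
  /\
  (forall f : X -> Romega, continuous_map dX romega_dist f ->
     ~ stably_transitive dX T f).
Proof.
  split.
  - apply part1.
  - intros f Hf [d [Hd Hs]].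
    destruct (part1 X dX T f Hf d Hd) as [g [Hg [Hc Hn]]].
    exact (Hn (Hs g Hg Hc)).
Qed.
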